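(* Let $\delta>0$ be an ordinal and $\mathcal I_{\omega^\delta}=\{I\subset\omega^\delta:\omega^\delta\not\hookrightarrow I\}$. Then $\mathcal I_{\omega^\delta}$ is an ideal of $P(\omega^\delta)$ and (a) $\mathbb P(\omega^\delta)=\langle \mathcal I_{\omega^\delta}^+,\subset\rangle$, $\mathrm{sm}(\mathbb P(\omega^\delta))=\langle\mathcal I_{\omega^\delta}^+,\subset_{\mathcal I_{\omega^\delta}}\rangle$ and $\mathrm{sq}(\mathbb P(\omega^\delta))=(P(\omega^\delta)/\mathcal I_{\omega^\delta})^+$; (b) if $\delta\ge\omega$, then $|\mathrm{sq}(\mathbb P(\omega^\delta))|\le 2^{|\delta|}$.
   Context: $\mathbb P(X)$ is the set of subsets of the ordinal $X$ order-isomorphic to $X$, ordered by inclusion. $L\hookrightarrow A$ means $L$ order-embeds into $A$. For an ideal $\mathcal I$ on a set $X$, $\mathcal I^+=P(X)\setminus\mathcal I$, and $A\subset_{\mathcal I}B$ iff $A\setminus B\in\mathcal I$; $(P(X)/\mathcal I)^+$ is the set of nonzero elements of the quotient Boolean algebra. $\mathrm{sm}$ and $\mathrm{sq}$ denote separative modification and separative quotient of a preorder ($p\le^*q$ iff every $r\le p$ has some $s\le r$ with $s\le q$; $\mathrm{sq}$ is the antisymmetric quotient of $\le^*$). *)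

(* Defs.v *)
(* ordinals are represented by well-ordered types. *)
From Stdlib Require Import List Arith.

Definition is_well_order {D : Type} (lt : D -> D -> Prop) : Prop :=
  (forall x, ~ lt x x) /\
  (forall x y z, lt x y -> lt y z -> lt x z) /\
  (forall x y, lt x y \/ x = y \/ lt y x) /\
  well_founded lt.

(* omega^delta, realised (Cantor normal form) as the finitely supported
   functions delta -> omega, ordered anti-lexicographically: f < g iff
   at the largest index where they differ, f is smaller. *)
Definition finsupp {D : Type} (f : D -> nat) : Prop :=
  exists l : list D, forall d, f d <> 0 -> In d l.

Definition omega_pow (D : Type) : Type := { f : D -> nat | finsupp f }.

Definition opow_lt {D : Type} (lt : D -> D -> Prop) (f g : omega_pow D) : Prop :=
  exists d, proj1_sig f d < proj1_sig g d /\
            (forall e, lt d e -> proj1_sig f e = proj1_sig g e).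

Definition subset {X : Type} (A B : X -> Prop) : Prop := forall x, A x -> B x.
Definition setminus {X : Type} (A B : X -> Prop) : X -> Prop := fun x => A x /\ ~ B x.
Definition setunion {X : Type} (A B : X -> Prop) : X -> Prop := fun x => A x \/ B x.

Definition embeds_into {X : Type} (lt : X -> X -> Prop) (A : X -> Prop) : Prop :=
  exists h : X -> X, (forall x, A (h x)) /\ (forall x y, lt x y <-> lt (h x) (h y)).

Definition iso_to_whole {X : Type} (lt : X -> X -> Prop) (A : X -> Prop) : Prop :=
  exists h : X -> X, (forall x, A (h x)) /\ (forall y, A y -> exists x, h x = y) /\
                     (forall x y, lt x y <-> lt (h x) (h y)).

(* P(X) : the carrier of the poset of copies of X, ordered by inclusion. *)
Definition PP {X : Type} (lt : X -> X -> Prop) : (X -> Prop) -> Prop := iso_to_whole lt.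

Definition I_X {X : Type} (lt : X -> X -> Prop) : (X -> Prop) -> Prop :=
  fun I => ~ embeds_into lt I.

Definition is_ideal {X : Type} (I : (X -> Prop) -> Prop) : Prop :=
  I (fun _ => False) /\
  (forall A B, subset A B -> I B -> I A) /\
  (forall A B, I A -> I B -> I (setunion A B)) /\
  ~ I (fun _ => True).

Definition sep_le {T : Type} (P : T -> Prop) (le : T -> T -> Prop) (p q : T) : Prop :=
  forall r, P r -> le r p -> exists s, P s /\ le s r /\ le s q.

Definition sq_car {T : Type} (P : T -> Prop) (le : T -> T -> Prop) : Type :=
  { C : T -> Prop | exists p, P p /\
      forall q, C q <-> (P q /\ sep_le P le p q /\ sep_le P le q p) }.

Definition sq_le {T : Type} (P : T -> Prop) (le : T -> T -> Prop)
  (a b : sq_car P le) : Prop :=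
  exists p q, proj1_sig a p /\ proj1_sig b q /\ sep_le P le p q.

(* (P(X)/I)^+ : nonzero elements of the quotient Boolean algebra,
   i.e. classes [A] (A notin I) modulo A ~ B iff A\B, B\A in I. *)
Definition bq_pos {X : Type} (I : (X -> Prop) -> Prop) : Type :=
  { C : (X -> Prop) -> Prop | exists A, ~ I A /\
      forall B, C B <-> (I (setminus A B) /\ I (setminus B A)) }.

Definition bq_le {X : Type} (I : (X -> Prop) -> Prop) (a b : bq_pos I) : Prop :=
  exists A B, proj1_sig a A /\ proj1_sig b B /\ I (setminus A B).

(* Main.v *)
Require Import Defs.
From Stdlib Require Import List Arith Lia.
From Stdlib Require Import Classical ClassicalEpsilon ProofIrrelevance FunctionalExtensionality PropExtensionality.
From Stdlib Require Import FinFun Wellfounded.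

Module P1.

Lemma wf_min {T : Type} (R : T -> T -> Prop) (wf : well_founded R) (P : T -> Prop) :
  (exists x, P x) -> exists x, P x /\ forall y, P y -> ~ R y x.
Proof.
  intros [x Px]. revert Px. induction (wf x) as [x _ IH]. intros Px.
  destruct (classic (exists y, P y /\ R y x)) as [[y [Py Ryx]]|N].
  - exact (IH y Ryx Py).
  - exists x. split; [exact Px|]. intros y Py Ryx. apply N. eauto.
Qed.

Notation vl f := (proj1_sig f).

Section Basics.
Variable D : Type.
Variable ltD : D -> D -> Prop.
Hypothesis hwo : is_well_order ltD.

Lemma ltD_irr : forall x, ~ ltD x x. Proof. apply hwo. Qed.
Lemma ltD_trans : forall x y z, ltD x y -> ltD y z -> ltD x z. Proof. apply hwo. Qed.
Lemma ltD_tot : forall x y, ltD x y \/ x = y \/ ltD y x. Proof. apply hwo. Qed.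
Lemma ltD_wf : well_founded ltD. Proof. apply hwo. Qed.
Lemma ltD_asym : forall x y, ltD x y -> ~ ltD y x.
Proof. intros x y H1 H2. exact (ltD_irr x (ltD_trans _ _ _ H1 H2)). Qed.

Lemma list_max (l : list D) (P : D -> Prop) :
  (forall d, P d -> In d l) -> (exists d, P d) ->
  exists m, P m /\ forall d, P d -> ~ ltD m d.
Proof.
  revert P. induction l as [|a l IH]; intros P HP [d Pd].
  - destruct (HP d Pd).
  - destruct (classic (exists d, P d /\ d <> a)) as [[d' [Pd' Hne]]|N].
    + destruct (IH (fun d => P d /\ d <> a)) as [m [[Pm Hm] Hmax]].
      * intros x [Px Hx]. destruct (HP x Px); [congruence|auto].
      * eauto.
      * destruct (classic (P a)) as [Pa|nPa].
        -- destruct (ltD_tot m a) as [Hlt|[Heq|Hgt]].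
           ++ exists a. split; [exact Pa|]. intros x Px Hax.
              destruct (classic (x = a)) as [->|Hxa].
              ** exact (ltD_irr _ Hax).
              ** exact (Hmax x (conj Px Hxa) (ltD_trans _ _ _ Hlt Hax)).
           ++ congruence.
           ++ exists m. split; [exact Pm|]. intros x Px Hmx.
              destruct (classic (x = a)) as [->|Hxa].
              ** exact (ltD_asym _ _ Hgt Hmx).
              ** exact (Hmax x (conj Px Hxa) Hmx).
        -- exists m. split; [exact Pm|]. intros x Px Hmx.
           destruct (classic (x = a)) as [->|Hxa]; [contradiction|].
           exact (Hmax x (conj Px Hxa) Hmx).
    + exists a. assert (Pa : P a).
      { destruct (classic (d = a)) as [->|Hda]; [exact Pd|]. exfalso; eauto. }
      split; [exact Pa|]. intros x Px Hax.
      destruct (classic (x = a)) as [->|Hxa]; [exact (ltD_irr _ Hax)|]. eauto.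
Qed.

Definition X := omega_pow D.
Definition ltX := @opow_lt D ltD.
Definition leD (a b : D) := a = b \/ ltD a b.

Lemma X_eq (f g : X) : vl f = vl g -> f = g.
Proof.
  destruct f as [f pf], g as [g pg]. simpl. intros ->.
  f_equal. apply proof_irrelevance.
Qed.

Lemma X_ext (f g : X) : (forall d, vl f d = vl g d) -> f = g.
Proof. intros H. apply X_eq. apply functional_extensionality. exact H. Qed.

Lemma X_fs (f : X) : exists l, forall d, vl f d <> 0 -> In d l.
Proof. exact (proj2_sig f). Qed.

Lemma ltX_irr : forall f, ~ ltX f f.
Proof. intros f [d [H _]]. lia. Qed.

Lemma ltX_trans : forall f g h, ltX f g -> ltX g h -> ltX f h.
Proof.
  intros f g h [d1 [H1 E1]] [d2 [H2 E2]].
  destruct (ltD_tot d1 d2) as [L|[<-|L]].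
  - exists d2. split.
    + rewrite (E1 d2 L). exact H2.
    + intros e He. rewrite (E1 e (ltD_trans _ _ _ L He)). apply E2. exact He.
  - exists d1. split; [lia|]. intros e He. rewrite E1, E2; auto.
  - exists d1. split.
    + rewrite <- (E2 d1 L). exact H1.
    + intros e He. rewrite (E1 e He). apply E2. exact (ltD_trans _ _ _ L He).
Qed.

Lemma ltX_asym : forall f g, ltX f g -> ~ ltX g f.
Proof. intros f g H1 H2. exact (ltX_irr f (ltX_trans _ _ _ H1 H2)). Qed.

Lemma ltX_tot : forall f g, ltX f g \/ f = g \/ ltX g f.
Proof.
  intros f g.
  destruct (classic (exists d, vl f d <> vl g d)) as [Hd|N].
  - destruct (X_fs f) as [l1 H1]. destruct (X_fs g) as [l2 H2].
    destruct (list_max (l1 ++ l2) (fun d => vl f d <> vl g d)) as [m [Hm Hmax]].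
    + intros d Hd'. apply in_or_app.
      destruct (Nat.eq_dec (vl f d) 0) as [E|E]; [right; apply H2; lia|left; apply H1; exact E].
    + exact Hd.
    + assert (Eq : forall e, ltD m e -> vl f e = vl g e).
      { intros e He. apply NNPP. intros Hne. exact (Hmax e Hne He). }
      destruct (Nat.lt_gt_cases (vl f m) (vl g m)) as [[L|L] _]; [exact Hm|..].
      * left. exists m. split; [exact L|exact Eq].
      * right; right. exists m. split; [exact L|]. intros e He. symmetry. apply Eq; exact He.
  - right; left. apply X_ext. intros d. apply NNPP. intros H. apply N. eauto.
Qed.

Lemma ltX_not_lt_le : forall f g, ~ ltX f g -> f = g \/ ltX g f.
Proof. intros f g H. destruct (ltX_tot f g) as [L|[E|L]]; tauto. Qed.

Definition updf (f : D -> nat) (c : D) (v : nat) : D -> nat :=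
  fun e => if excluded_middle_informative (e = c) then v else f e.

Lemma updf_fs (f : X) c v : finsupp (updf (vl f) c v).
Proof.
  destruct (X_fs f) as [l Hl]. exists (c :: l). intros d Hd. unfold updf in Hd.
  destruct (excluded_middle_informative (d = c)) as [->|Hn]; [left; reflexivity|right; auto].
Qed.

Definition upd (f : X) (c : D) (v : nat) : X := exist _ (updf (vl f) c v) (updf_fs f c v).

Lemma upd_at f c v : vl (upd f c v) c = v.
Proof. unfold upd, updf; simpl. destruct (excluded_middle_informative (c = c)); congruence. Qed.
Lemma upd_ne f c v e : e <> c -> vl (upd f c v) e = vl f e.
Proof. intros H. unfold upd, updf; simpl. destruct (excluded_middle_informative (e = c)); congruence. Qed.

Definition Om (P : D -> Prop) (f : X) : Prop := forall d, vl f d <> 0 -> P d.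

Lemma zero_fs : finsupp (fun _ : D => 0).
Proof. exists nil. intros d H. lia. Qed.
Definition zeroX : X := exist _ (fun _ => 0) zero_fs.

Lemma X_top (f : X) : (forall d, vl f d = 0) \/
  exists t, vl f t <> 0 /\ forall e, vl f e <> 0 -> leD e t.
Proof.
  destruct (classic (exists d, vl f d <> 0)) as [H|N].
  - right. destruct (X_fs f) as [l Hl].
    destruct (list_max l (fun d => vl f d <> 0) Hl H) as [m [Hm Hmax]].
    exists m. split; [exact Hm|]. intros e He. unfold leD.
    destruct (ltD_tot e m) as [L|[E|L]]; auto. exfalso; exact (Hmax e He L).
  - left. intros d. apply NNPP. intros H'. apply N; eauto.
Qed.

Lemma nothing_below_zero (f g : X) : (forall d, vl f d = 0) -> ~ ltX g f.
Proof. intros H [d [Hd _]]. rewrite H in Hd. lia. Qed.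

Lemma pred_Om_le (c : D) (f g : X) : Om (fun e => leD e c) f -> ltX g f -> Om (fun e => leD e c) g.
Proof.
  intros Hf [d [Hd E]] e He.
  destruct (ltD_tot d e) as [L|[<-|L]].
  - apply Hf. rewrite <- (E e L). exact He.
  - apply Hf. lia.
  - assert (Hdc : leD d c) by (apply Hf; lia).
    destruct Hdc as [->|Hdc]; right; [exact L|exact (ltD_trans _ _ _ L Hdc)].
Qed.

Lemma ltX_wf : well_founded ltX.
Proof.
  assert (HC : forall c f, Om (fun e => leD e c) f -> Acc ltX f).
  { intros c. induction (ltD_wf c) as [c _ IHc].
    assert (Below : forall r, Om (fun e => ltD e c) r -> Acc ltX r).
    { intros r Hr. destruct (X_top r) as [Z|[t [Ht Htop]]].
      - constructor. intros y Hy. exfalso. exact (nothing_below_zero r y Z Hy).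
      - apply (IHc t (Hr t Ht)). intros e He. apply Htop; exact He. }
    assert (Main : forall n f, Om (fun e => leD e c) f -> vl f c = n -> Acc ltX f).
    { intros n. induction (lt_wf n) as [n _ IHn].
      assert (Inner : forall r, Acc ltX r -> Om (fun e => ltD e c) r ->
                forall f, Om (fun e => leD e c) f -> vl f c = n ->
                (forall e, e <> c -> vl f e = vl r e) -> Acc ltX f).
      { intros r Ar. induction Ar as [r _ IHr]. intros Hr f Hf Hfc Hfr.
        constructor. intros g Hgf.
        pose proof (pred_Om_le c f g Hf Hgf) as Hg.
        destruct Hgf as [d [Hd E]].
        destruct (ltD_tot d c) as [L|[->|L]].
        - rewrite <- (E c L) in Hfc.
          apply (IHr (upd g c 0)).
          + exists d. split.
            * rewrite upd_ne by (intro; subst; exact (ltD_irr _ L)).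
              rewrite <- Hfr by (intro; subst; exact (ltD_irr _ L)). exact Hd.
            * intros e He. destruct (classic (e = c)) as [->|Hec].
              -- rewrite upd_at. destruct (Nat.eq_dec (vl r c) 0) as [E0|E0]; [auto|exfalso; exact (ltD_irr _ (Hr c E0))].
              -- rewrite upd_ne by exact Hec. rewrite <- Hfr by exact Hec. apply E; exact He.
          + intros e He. destruct (classic (e = c)) as [->|Hec].
            * rewrite upd_at in He. lia.
            * rewrite upd_ne in He by exact Hec. destruct (Hg e He) as [|]; [contradiction|assumption].
          + exact Hg.
          + exact Hfc.
          + intros e Hec. rewrite upd_ne by exact Hec. reflexivity.
        - apply (IHn (vl g c)); [lia|exact Hg|reflexivity].
        - exfalso. assert (Hdc : leD d c) by (apply Hf; lia).
          destruct Hdc as [->|Hdc]; [exact (ltD_irr _ L)|exact (ltD_asym _ _ L Hdc)]. }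
      intros f Hf Hfc.
      assert (Hr : Om (fun e => ltD e c) (upd f c 0)).
      { intros e He. destruct (classic (e = c)) as [->|Hec].
        + rewrite upd_at in He. lia.
        + rewrite upd_ne in He by exact Hec. destruct (Hf e He); [contradiction|assumption]. }
      apply (Inner (upd f c 0) (Below _ Hr) Hr f Hf Hfc).
      intros e Hec. rewrite upd_ne by exact Hec. reflexivity. }
    intros f Hf. exact (Main (vl f c) f Hf eq_refl). }
  intros f. destruct (X_top f) as [Z|[t [Ht Htop]]].
  - constructor. intros y Hy. exfalso. exact (nothing_below_zero f y Z Hy).
  - apply (HC t). intros e He. apply Htop; exact He.
Qed.

End Basics.

End P1.
Import P1.

Module P2.

Section Collapse.
Variables (T U : Type) (R : T -> T -> Prop) (Q : U -> U -> Prop) (PT : T -> Prop) (PU : U -> Prop).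
Hypothesis Rwf : well_founded R.
Hypothesis Rtr : forall a b c, R a b -> R b c -> R a c.
Hypothesis Rtot : forall a b, PT a -> PT b -> R a b \/ a = b \/ R b a.
Hypothesis Qwf : well_founded Q.
Hypothesis Qirr : forall a, ~ Q a a.
Hypothesis Qtot : forall a b, PU a -> PU b -> Q a b \/ a = b \/ Q b a.
Variable u0 : U.

Definition leastU (S : U -> Prop) : U :=
  match excluded_middle_informative (exists u, S u /\ forall v, S v -> ~ Q v u) with
  | left H => proj1_sig (constructive_indefinite_description _ H)
  | right _ => u0 end.

Lemma leastU_spec (S : U -> Prop) : (exists u, S u) -> S (leastU S) /\ forall v, S v -> ~ Q v (leastU S).
Proof.
  intros H. unfold leastU. destruct (excluded_middle_informative _) as [H'|N].
  - destruct (constructive_indefinite_description _ H') as [u Hu]. exact Hu.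
  - exfalso. apply N. apply wf_min; assumption.
Qed.

Definition Fc (t : T) (rec : forall t', R t' t -> U) : U :=
  leastU (fun y => PU y /\ forall t' (H : R t' t), PT t' -> Q (rec t' H) y).

Definition cc : T -> U := Fix Rwf (fun _ => U) Fc.

Lemma cc_eq t : cc t = leastU (fun y => PU y /\ forall t', R t' t -> PT t' -> Q (cc t') y).
Proof.
  unfold cc at 1. rewrite Fix_eq.
  - unfold Fc. f_equal.
  - intros x f g Hfg. unfold Fc. f_equal. apply functional_extensionality. intros y.
    apply propositional_extensionality. split.
    + intros [H1 H2]. split; [exact H1|]. intros t' H. rewrite <- Hfg. apply H2.
    + intros [H1 H2]. split; [exact H1|]. intros t' H. rewrite Hfg. apply H2.
Qed.

Definition cand (t : T) (y : U) := PU y /\ forall t', R t' t -> PT t' -> Q (cc t') y.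
Definition Dom (t : T) := PT t /\ forall t', PT t' -> (R t' t \/ t' = t) -> exists y, cand t' y.

Lemma cc_spec t : (exists y, cand t y) -> cand t (cc t) /\ forall v, cand t v -> ~ Q v (cc t).
Proof. intros H. rewrite cc_eq. apply leastU_spec. exact H. Qed.

Lemma Dom_cand t : Dom t -> cand t (cc t) /\ forall v, cand t v -> ~ Q v (cc t).
Proof. intros [Ht H]. apply cc_spec. apply H; auto. Qed.

Lemma Dom_PU t : Dom t -> PU (cc t).
Proof. intros H. apply (Dom_cand t H). Qed.

Lemma Dom_incr t t' : Dom t -> PT t' -> R t' t -> Q (cc t') (cc t).
Proof. intros H Ht' Hr. apply (Dom_cand t H); assumption. Qed.

Lemma Dom_down t t' : Dom t -> PT t' -> R t' t -> Dom t'.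
Proof.
  intros [Ht H] Ht' Hr. split; [exact Ht'|]. intros s Hs [Hsr| ->].
  - apply H; [exact Hs|left; exact (Rtr _ _ _ Hsr Hr)].
  - apply H; [exact Hs|left; exact Hr].
Qed.

Lemma image_down t u : Dom t -> PU u -> Q u (cc t) -> exists t', Dom t' /\ cc t' = u.
Proof.
  intros Ht Hu Hq.
  assert (Hnc : ~ cand t u) by (intros Hc; exact (proj2 (Dom_cand t Ht) u Hc Hq)).
  assert (Hex : exists t', PT t' /\ R t' t /\ ~ Q (cc t') u).
  { apply NNPP. intros N. apply Hnc. split; [exact Hu|]. intros t' Hr Hp.
    apply NNPP. intros Hn. apply N. eauto. }
  destruct (wf_min R Rwf _ Hex) as [t1 [[Hp1 [Hr1 Hn1]] Hmin]].
  exists t1. assert (D1 : Dom t1) by exact (Dom_down t t1 Ht Hp1 Hr1).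
  split; [exact D1|].
  destruct (Qtot (cc t1) u (Dom_PU t1 D1) Hu) as [L|[E|L]]; [contradiction|exact E|].
  exfalso.
  assert (Hnc1 : ~ cand t1 u) by (intros Hc; exact (proj2 (Dom_cand t1 D1) u Hc L)).
  apply Hnc1. split; [exact Hu|]. intros t2 Hr2 Hp2. apply NNPP. intros Hn2.
  apply (Hmin t2); [|exact Hr2]. split; [exact Hp2|]. split; [exact (Rtr _ _ _ Hr2 Hr1)|exact Hn2].
Qed.

Lemma collapse_final :
  (forall t, PT t -> Dom t) \/
  exists t0, PT t0 /\ (forall t, PT t -> (Dom t <-> R t t0)) /\
             forall u, PU u -> exists t, Dom t /\ cc t = u.
Proof.
  destruct (classic (forall t, PT t -> Dom t)) as [H|N]; [left; exact H|right].
  assert (Hex : exists t0, PT t0 /\ ~ exists y, cand t0 y).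
  { apply NNPP. intros M. apply N. intros t Ht. split; [exact Ht|].
    intros t' Ht' _. apply NNPP. intros Hn. apply M. eauto. }
  destruct (wf_min R Rwf _ Hex) as [t0 [[Hp0 Hn0] Hmin]].
  exists t0. split; [exact Hp0|]. split.
  - intros t Ht. split.
    + intros [_ HD]. destruct (Rtot t t0 Ht Hp0) as [L|[E|L]]; [exact L| |].
      * exfalso. apply Hn0. apply HD; [exact Hp0|right; symmetry; exact E].
      * exfalso. apply Hn0. apply HD; [exact Hp0|left; exact L].
    + intros L. split; [exact Ht|]. intros t' Ht' Hle. apply NNPP. intros Hn.
      apply (Hmin t'); [split; assumption|]. destruct Hle as [Hle| ->]; [exact (Rtr _ _ _ Hle L)|exact L].
  - intros u Hu.
    assert (Hnc : ~ cand t0 u) by (intros Hc; apply Hn0; eauto).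
    assert (Hex2 : exists t', PT t' /\ R t' t0 /\ ~ Q (cc t') u).
    { apply NNPP. intros M. apply Hnc. split; [exact Hu|]. intros t' Hr Hp.
      apply NNPP. intros Hn. apply M. eauto. }
    destruct Hex2 as [t' [Hp' [Hr' Hn']]].
    assert (D' : Dom t').
    { split; [exact Hp'|]. intros s Hs Hle. apply NNPP. intros Hn.
      apply (Hmin s); [split; assumption|]. destruct Hle as [Hle| ->]; [exact (Rtr _ _ _ Hle Hr')|exact Hr']. }
    destruct (Qtot (cc t') u (Dom_PU t' D') Hu) as [L|[E|L]]; [contradiction|eauto|].
    exact (image_down t' u D' Hu L).
Qed.

End Collapse.

End P2.
Import P2.

Module P3.

Section Claims.
Variable D : Type.
Variable ltD : D -> D -> Prop.
Hypothesis hwo : is_well_order ltD.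

Notation X := (P1.X D).
Notation ltX := (P1.ltX D ltD).
Notation leD := (P1.leD D ltD).
Notation Om := (Om D).
Notation upd := (upd D).

Definition Claim (P : D -> Prop) : Prop :=
  forall col : X -> bool, exists (g : X -> X) (k : bool),
    (forall f, Om P f -> Om P (g f)) /\
    (forall f f', Om P f -> Om P f' -> ltX f f' -> ltX (g f) (g f')) /\
    (forall f, Om P f -> col (g f) = k).

Lemma Om_ext P P' f : (forall d, P d <-> P' d) -> Om P f -> Om P' f.
Proof. intros H Hf d Hd. apply H. apply Hf. exact Hd. Qed.

Lemma Claim_ext P P' : (forall d, P d <-> P' d) -> Claim P -> Claim P'.
Proof.
  intros H C col. destruct (C col) as [g [k [H1 [H2 H3]]]]. exists g, k.
  assert (H' : forall d, P' d <-> P d) by (intros d; split; apply H).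
  split; [|split].
  - intros f Hf. apply (Om_ext P); [exact H|]. apply H1. apply (Om_ext P'); assumption.
  - intros f f' Hf Hf' L. apply H2; [apply (Om_ext P')|apply (Om_ext P')|]; assumption.
  - intros f Hf. apply H3. apply (Om_ext P'); assumption.
Qed.

Lemma Claim_empty P : (forall d, ~ P d) -> Claim P.
Proof.
  intros HP col. exists (fun f => f), (col (zeroX D)). split; [|split].
  - auto.
  - auto.
  - intros f Hf. f_equal. apply X_ext. intros d. simpl.
    destruct (Nat.eq_dec (vl f d) 0) as [E|E]; [exact E|]. exfalso. exact (HP d (Hf d E)).
Qed.

Lemma Om_lt_zero c x e : Om (fun d => ltD d c) x -> ltD c e -> vl x e = 0.
Proof.
  intros Hx L. destruct (Nat.eq_dec (vl x e) 0) as [E|E]; [exact E|].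
  exfalso. exact (ltD_asym D ltD hwo _ _ L (Hx e E)).
Qed.

Lemma Om_le_zero c x e : Om (fun d => leD d c) x -> ltD c e -> vl x e = 0.
Proof.
  intros Hx L. destruct (Nat.eq_dec (vl x e) 0) as [E|E]; [exact E|].
  exfalso. destruct (Hx e E) as [->|L2]; [exact (ltD_irr D ltD hwo _ L)|exact (ltD_asym D ltD hwo _ _ L L2)].
Qed.

Lemma upd_lt a b c v : ltX a b -> Om (fun d => d <> c) b -> ltX (upd a c v) (upd b c v).
Proof.
  intros [d [Hd E]] Hb. assert (Hdc : d <> c) by (apply Hb; lia).
  exists d. split.
  - rewrite !upd_ne by exact Hdc. exact Hd.
  - intros e He. destruct (classic (e = c)) as [->|Hec].
    + rewrite !upd_at. reflexivity.
    + rewrite !upd_ne by exact Hec. apply E; exact He.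
Qed.

Definition inc (a : X) (c : D) : X := upd a c (S (vl a c)).

Lemma inc_lt a b c : ltX a b -> ltX (inc a c) (inc b c).
Proof.
  intros [d [Hd E]]. unfold inc. exists d. split.
  - destruct (classic (d = c)) as [->|Hdc].
    + rewrite !upd_at. lia.
    + rewrite !upd_ne by exact Hdc. exact Hd.
  - intros e He. destruct (classic (e = c)) as [->|Hec].
    + rewrite !upd_at. rewrite (E c He). reflexivity.
    + rewrite !upd_ne by exact Hec. apply E; exact He.
Qed.

Lemma ltX_bound_pred f f' b : ltX f f' -> (forall e, vl f' e <> 0 -> leD e b) ->
  forall e, vl f e <> 0 -> leD e b.
Proof.
  intros [d [Hd E]] Hb e He.
  destruct (ltD_tot D ltD hwo d e) as [L|[<-|L]].
  - apply Hb. rewrite <- (E e L). exact He.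
  - apply Hb. lia.
  - assert (Hdb : leD d b) by (apply Hb; lia).
    destruct Hdb as [->|Hdb]; right; [exact L|exact (ltD_trans D ltD hwo _ _ _ L Hdb)].
Qed.

Lemma Claim_succ c : Claim (fun d => ltD d c) -> Claim (fun d => leD d c).
Proof.
  intros C col.
  assert (Hn : forall n : nat, { gk : (X -> X) * bool |
     (forall f, Om (fun d => ltD d c) f -> Om (fun d => ltD d c) (fst gk f)) /\
     (forall f f', Om (fun d => ltD d c) f -> Om (fun d => ltD d c) f' -> ltX f f' -> ltX (fst gk f) (fst gk f')) /\
     (forall f, Om (fun d => ltD d c) f -> col (upd (fst gk f) c n) = snd gk) }).
  { intros n. apply constructive_indefinite_description.
    destruct (C (fun f => col (upd f c n))) as [g [k H]]. exists (g, k). exact H. }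
  set (G := fun n => fst (proj1_sig (Hn n))).
  set (K := fun n => snd (proj1_sig (Hn n))).
  assert (HG1 : forall n f, Om (fun d => ltD d c) f -> Om (fun d => ltD d c) (G n f)) by (intros n; apply (proj2_sig (Hn n))).
  assert (HG2 : forall n f f', Om (fun d => ltD d c) f -> Om (fun d => ltD d c) f' -> ltX f f' -> ltX (G n f) (G n f')) by (intros n; apply (proj2_sig (Hn n))).
  assert (HG3 : forall n f, Om (fun d => ltD d c) f -> col (upd (G n f) c n) = K n) by (intros n; apply (proj2_sig (Hn n))).
  clearbody G K.
  assert (Hk : exists k, forall N, exists n, N <= n /\ K n = k).
  { destruct (classic (forall N, exists n, N <= n /\ K n = true)) as [H|H]; [eauto|].
    apply not_all_ex_not in H. destruct H as [N0 HN0]. exists false. intros N.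
    exists (max N N0). split; [lia|]. destruct (K (max N N0)) eqn:E; [|reflexivity].
    exfalso. apply HN0. exists (max N N0). split; [lia|exact E]. }
  destruct Hk as [k Hk].
  assert (Hsel : forall N, { n | N <= n /\ K n = k }) by (intros N; apply constructive_indefinite_description; apply Hk).
  set (sel := fun N => proj1_sig (Hsel N)).
  assert (Hsel1 : forall N, N <= sel N) by (intros N; apply (proj2_sig (Hsel N))).
  assert (Hsel2 : forall N, K (sel N) = k) by (intros N; apply (proj2_sig (Hsel N))).
  clearbody sel.
  set (m := fix m j := match j with O => sel 0 | S j => sel (S (m j)) end).
  assert (Hm1 : forall j, K (m j) = k) by (intros [|j]; apply Hsel2).
  assert (Hm2 : forall j j', j < j' -> m j < m j').
  { intros j j' L. induction L as [|j' L IH].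
    - simpl. specialize (Hsel1 (S (m j))). lia.
    - simpl. specialize (Hsel1 (S (m j'))). lia. }
  clearbody m.
  exists (fun f => upd (G (m (vl f c)) (upd f c 0)) c (m (vl f c))), k.
  assert (R0 : forall f, Om (fun d => leD d c) f -> Om (fun d => ltD d c) (upd f c 0)).
  { intros f Hf e He. destruct (classic (e = c)) as [->|Hec].
    - rewrite upd_at in He. lia.
    - rewrite upd_ne in He by exact Hec. destruct (Hf e He) as [|]; [contradiction|assumption]. }
  split; [|split].
  - intros f Hf e He. destruct (classic (e = c)) as [->|Hec]; [left; reflexivity|].
    rewrite upd_ne in He by exact Hec. right. exact (HG1 _ _ (R0 f Hf) e He).
  - intros f f' Hf Hf' L.
    assert (Hc : vl f c <= vl f' c).
    { destruct L as [d [Hd E]]. destruct (ltD_tot D ltD hwo d c) as [L1|[->|L1]].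
      - rewrite (E c L1). lia.
      - lia.
      - exfalso. assert (Hdc : leD d c) by (apply Hf'; lia).
        destruct Hdc as [->|Hdc]; [exact (ltD_irr D ltD hwo _ L1)|exact (ltD_asym D ltD hwo _ _ L1 Hdc)]. }
    destruct (Nat.eq_dec (vl f c) (vl f' c)) as [E|E].
    + rewrite <- E. apply upd_lt.
      * apply HG2; [apply R0; exact Hf|apply R0; exact Hf'|].
        destruct L as [d [Hd Ed]]. exists d.
        assert (Hdc : d <> c) by (intros ->; lia).
        split; [rewrite !upd_ne by exact Hdc; exact Hd|].
        intros e He. destruct (classic (e = c)) as [->|Hec]; [rewrite !upd_at; reflexivity|].
        rewrite !upd_ne by exact Hec. apply Ed; exact He.
      * intros d Hd Hdc. subst d. pose proof (HG1 _ _ (R0 f' Hf') c Hd). exact (ltD_irr D ltD hwo _ H).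
    + exists c. split.
      * rewrite !upd_at. apply Hm2. lia.
      * intros e He. assert (Hec : e <> c) by (intros ->; exact (ltD_irr D ltD hwo _ He)).
        rewrite !upd_ne by exact Hec.
        rewrite (Om_lt_zero c _ e (HG1 _ _ (R0 f Hf)) He).
        rewrite (Om_lt_zero c _ e (HG1 _ _ (R0 f' Hf')) He). reflexivity.
  - intros f Hf. rewrite HG3 by (apply R0; exact Hf). apply Hm1.
Qed.

Lemma Claim_limit P :
  (forall a b, P b -> ltD a b -> P a) -> (exists d, P d) ->
  (forall b, P b -> exists b', P b' /\ ltD b b') ->
  (forall b, P b -> Claim (fun d => leD d b)) -> Claim P.
Proof.
  intros Pdown [d0 Pd0] Pnomax C col.
  assert (Hb : forall b : D, { gk : (X -> X) * bool | P b ->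
     (forall f, Om (fun d => leD d b) f -> Om (fun d => leD d b) (fst gk f)) /\
     (forall f f', Om (fun d => leD d b) f -> Om (fun d => leD d b) f' -> ltX f f' -> ltX (fst gk f) (fst gk f')) /\
     (forall f, Om (fun d => leD d b) f -> col (inc (fst gk f) b) = snd gk) }).
  { intros b. apply constructive_indefinite_description.
    destruct (classic (P b)) as [Pb|nPb].
    - destruct (C b Pb (fun f => col (inc f b))) as [g [k H]]. exists (g, k). intros _. exact H.
    - exists ((fun f => f), true). intros Pb; contradiction. }
  set (G := fun b => fst (proj1_sig (Hb b))).
  set (K := fun b => snd (proj1_sig (Hb b))).
  assert (HG1 : forall b, P b -> forall f, Om (fun d => leD d b) f -> Om (fun d => leD d b) (G b f)) by (intros b Pb; apply (proj2_sig (Hb b) Pb)).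
  assert (HG2 : forall b, P b -> forall f f', Om (fun d => leD d b) f -> Om (fun d => leD d b) f' -> ltX f f' -> ltX (G b f) (G b f')) by (intros b Pb; apply (proj2_sig (Hb b) Pb)).
  assert (HG3 : forall b, P b -> forall f, Om (fun d => leD d b) f -> col (inc (G b f) b) = K b) by (intros b Pb; apply (proj2_sig (Hb b) Pb)).
  clearbody G K.
  assert (leD_trans : forall a b c, leD a b -> leD b c -> leD a c).
  { intros a b c [->|H1] [->|H2]; unfold P1.leD; auto. right; exact (ltD_trans D ltD hwo _ _ _ H1 H2). }
  assert (leD_tot : forall a b, leD a b \/ ltD b a).
  { intros a b. destruct (ltD_tot D ltD hwo a b) as [L|[E|L]]; unfold P1.leD; auto. }
  assert (leD_P : forall a b, P b -> leD a b -> P a).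
  { intros a b Pb [->|L]; [exact Pb|exact (Pdown _ _ Pb L)]. }
  assert (Hk : exists k, forall b, P b -> exists c, P c /\ leD b c /\ K c = k).
  { destruct (classic (forall b, P b -> exists c, P c /\ leD b c /\ K c = true)) as [H|H]; [eauto|].
    apply not_all_ex_not in H. destruct H as [b0 Hb0]. exists false. intros b Pb.
    assert (Hc : exists c, P c /\ leD b c /\ leD b0 c).
    { destruct (leD_tot b b0) as [L|L].
      - exists b0. split; [|split]; [|exact L|left; reflexivity].
        apply NNPP. intros nP. apply Hb0. intros P0. contradiction.
      - exists b. split; [exact Pb|]. split; [left; reflexivity|right; exact L]. }
    destruct Hc as [c [Pc [L1 L2]]]. exists c. split; [exact Pc|]. split; [exact L1|].
    destruct (K c) eqn:E; [|reflexivity]. exfalso. apply Hb0. intros _. exists c. auto. }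
  destruct Hk as [k Hk].
  assert (Hpsi : forall b, { c | P b -> (P c /\ leD b c /\ K c = k) /\
             forall c', P c' /\ leD b c' /\ K c' = k -> ~ ltD c' c }).
  { intros b. apply constructive_indefinite_description.
    destruct (classic (P b)) as [Pb|nPb]; [|exists b; intros; contradiction].
    destruct (wf_min ltD (ltD_wf D ltD hwo) (fun c => P c /\ leD b c /\ K c = k) (Hk b Pb)) as [c Hc].
    exists c. intros _. exact Hc. }
  set (psi := fun b => proj1_sig (Hpsi b)).
  assert (Hpsi1 : forall b, P b -> P (psi b) /\ leD b (psi b) /\ K (psi b) = k) by (intros b Pb; apply (proj2_sig (Hpsi b) Pb)).
  assert (Hpsi2 : forall b c', P b -> P c' /\ leD b c' /\ K c' = k -> ~ ltD c' (psi b)) by (intros b c' Pb; apply (proj2_sig (Hpsi b) Pb)).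
  clearbody psi.
  assert (psi_mono : forall b b', P b -> P b' -> leD b b' -> leD (psi b) (psi b')).
  { intros b b' Pb Pb' L. destruct (Hpsi1 b' Pb') as [P1 [L1 K1]].
    destruct (leD_tot (psi b) (psi b')) as [H|H]; [exact H|].
    exfalso. apply (Hpsi2 b (psi b') Pb); [|exact H]. split; [exact P1|]. split; [exact (leD_trans _ _ _ L L1)|exact K1]. }
  assert (Ht : forall f : X, { b | Om P f -> (P b /\ forall e, vl f e <> 0 -> leD e b) /\
             forall b', (P b' /\ forall e, vl f e <> 0 -> leD e b') -> ~ ltD b' b }).
  { intros f. apply constructive_indefinite_description.
    destruct (classic (Om P f)) as [Hf|nHf]; [|exists d0; intros; contradiction].
    assert (Hex : exists b, P b /\ forall e, vl f e <> 0 -> leD e b).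
    { destruct (X_top D ltD hwo f) as [Z|[t [Ht Htop]]].
      - exists d0. split; [exact Pd0|]. intros e He. rewrite Z in He. lia.
      - exists t. split; [exact (Hf t Ht)|exact Htop]. }
    destruct (wf_min ltD (ltD_wf D ltD hwo) _ Hex) as [b Hbb]. exists b. intros _. exact Hbb. }
  set (tt := fun f => proj1_sig (Ht f)).
  assert (Ht1 : forall f, Om P f -> P (tt f) /\ forall e, vl f e <> 0 -> leD e (tt f)) by (intros f Hf; apply (proj2_sig (Ht f) Hf)).
  assert (Ht2 : forall f b', Om P f -> (P b' /\ forall e, vl f e <> 0 -> leD e b') -> ~ ltD b' (tt f)) by (intros f b' Hf; apply (proj2_sig (Ht f) Hf)).
  clearbody tt.
  assert (tt_mono : forall f f', Om P f -> Om P f' -> ltX f f' -> leD (tt f) (tt f')).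
  { intros f f' Hf Hf' L. destruct (Ht1 f' Hf') as [P1 B1].
    destruct (leD_tot (tt f) (tt f')) as [H|H]; [exact H|]. exfalso.
    apply (Ht2 f (tt f') Hf); [|exact H]. split; [exact P1|]. exact (ltX_bound_pred f f' _ L B1). }
  assert (Hfc : forall f, Om P f -> P (psi (tt f)) /\ Om (fun d => leD d (psi (tt f))) f).
  { intros f Hf. destruct (Ht1 f Hf) as [P1 B1]. destruct (Hpsi1 _ P1) as [P2 [L2 _]].
    split; [exact P2|]. intros e He. exact (leD_trans _ _ _ (B1 e He) L2). }
  assert (Om_inc : forall b x, Om (fun d => leD d b) x -> Om (fun d => leD d b) (inc x b)).
  { intros b x Hx e He. unfold inc in He. destruct (classic (e = b)) as [->|Heb]; [left; reflexivity|].
    rewrite upd_ne in He by exact Heb. exact (Hx e He). }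
  exists (fun f => inc (G (psi (tt f)) f) (psi (tt f))), k.
  split; [|split].
  - intros f Hf. destruct (Hfc f Hf) as [P2 H2]. intros e He.
    apply (leD_P e (psi (tt f)) P2). exact (Om_inc _ _ (HG1 _ P2 _ H2) e He).
  - intros f f' Hf Hf' L. destruct (Hfc f Hf) as [P2 H2]. destruct (Hfc f' Hf') as [P2' H2'].
    destruct (psi_mono (tt f) (tt f') (proj1 (Ht1 f Hf)) (proj1 (Ht1 f' Hf')) (tt_mono f f' Hf Hf' L)) as [E|L2].
    + rewrite <- E. apply inc_lt. apply (HG2 _ P2); [exact H2| |exact L]. rewrite E. exact H2'.
    + set (c := psi (tt f)) in *. set (c' := psi (tt f')) in *.
      assert (Hx : Om (fun d => leD d c) (G c f)) by exact (HG1 _ P2 _ H2).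
      assert (Hx' : Om (fun d => leD d c') (G c' f')) by exact (HG1 _ P2' _ H2').
      exists c'. split.
      * unfold inc. rewrite upd_at.
        assert (Hcc : c' <> c) by (intros E; rewrite E in L2; exact (ltD_irr D ltD hwo _ L2)).
        rewrite upd_ne by exact Hcc. rewrite (Om_le_zero c _ c' Hx L2). lia.
      * intros e He. unfold inc.
        assert (Hec' : e <> c') by (intros ->; exact (ltD_irr D ltD hwo _ He)).
        assert (L3 : ltD c e) by exact (ltD_trans D ltD hwo _ _ _ L2 He).
        assert (Hec : e <> c) by (intros ->; exact (ltD_irr D ltD hwo _ L3)).
        rewrite !upd_ne by assumption.
        rewrite (Om_le_zero c _ e Hx L3). rewrite (Om_le_zero c' _ e Hx' He). reflexivity.
  - intros f Hf. destruct (Hfc f Hf) as [P2 H2]. rewrite (HG3 _ P2 _ H2). apply Hpsi1. apply Ht1. exact Hf.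
Qed.

Lemma all_claims : forall c, Claim (fun d => ltD d c) /\ Claim (fun d => leD d c).
Proof.
  intros c. induction (ltD_wf D ltD hwo c) as [c _ IH].
  assert (C1 : Claim (fun d => ltD d c)).
  { destruct (classic (exists d, ltD d c)) as [Hne|Hem]; [|apply Claim_empty; intros d Hd; apply Hem; eauto].
    destruct (classic (exists b, ltD b c /\ forall d, ltD d c -> leD d b)) as [[b [Hb Hmax]]|Hnm].
    - apply (Claim_ext (fun d => leD d b)); [|exact (proj2 (IH b Hb))].
      intros d. split; [intros [->|L]; [exact Hb|exact (ltD_trans D ltD hwo _ _ _ L Hb)]|apply Hmax].
    - apply Claim_limit.
      + intros a b Hb L. exact (ltD_trans D ltD hwo _ _ _ L Hb).
      + exact Hne.
      + intros b Hb. apply NNPP. intros N. apply Hnm. exists b. split; [exact Hb|].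
        intros d Hd. destruct (ltD_tot D ltD hwo d b) as [L|[E|L]]; unfold P1.leD; auto.
        exfalso. apply N. eauto.
      + intros b Hb. exact (proj2 (IH b Hb)). }
  split; [exact C1|]. apply Claim_succ. exact C1.
Qed.

Lemma Claim_all : Claim (fun _ => True).
Proof.
  destruct (classic (exists b, forall d, leD d b)) as [[b Hmax]|Hnm].
  - apply (Claim_ext (fun d => leD d b)); [|exact (proj2 (all_claims b))].
    intros d; split; auto.
  - destruct (classic (exists d : D, True)) as [Hne|Hem]; [|apply Claim_empty; intros d _; apply Hem; eauto].
    apply Claim_limit; auto.
    + intros b _. apply NNPP. intros N. apply Hnm. exists b. intros d.
      destruct (ltD_tot D ltD hwo d b) as [L|[E|L]]; unfold P1.leD; auto. exfalso. apply N. eauto.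
    + intros b _. exact (proj2 (all_claims b)).
Qed.

Lemma mono_reflect (phi : X -> X) : (forall x y, ltX x y -> ltX (phi x) (phi y)) ->
  forall x y, ltX (phi x) (phi y) -> ltX x y.
Proof.
  intros Hm x y L. destruct (ltX_tot D ltD hwo x y) as [H|[->|H]]; [exact H| |].
  - exfalso. exact (ltX_irr D ltD (phi y) L).
  - exfalso. exact (ltX_asym D ltD hwo _ _ L (Hm _ _ H)).
Qed.

Lemma indec (A B : X -> Prop) : embeds_into ltX (setunion A B) -> embeds_into ltX A \/ embeds_into ltX B.
Proof.
  intros [h [Hh Hiff]].
  destruct (Claim_all (fun x => if excluded_middle_informative (A (h x)) then true else false)) as [g [k [_ [Hg Hc]]]].
  assert (Hm : forall x y, ltX x y -> ltX (h (g x)) (h (g y))).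
  { intros x y L. apply (proj1 (Hiff _ _)). apply Hg; [intros ? ?; exact I|intros ? ?; exact I|exact L]. }
  assert (Hi : forall x y, ltX x y <-> ltX (h (g x)) (h (g y))).
  { intros x y. split; [apply Hm|apply (mono_reflect (fun z => h (g z))); exact Hm]. }
  destruct k.
  - left. exists (fun x => h (g x)). split; [|exact Hi]. intros x.
    specialize (Hc x (fun _ _ => I)). simpl in Hc.
    destruct (excluded_middle_informative (A (h (g x)))); [assumption|discriminate].
  - right. exists (fun x => h (g x)). split; [|exact Hi]. intros x.
    specialize (Hc x (fun _ _ => I)). simpl in Hc.
    destruct (excluded_middle_informative (A (h (g x)))); [discriminate|].
    destruct (Hh (g x)); [contradiction|assumption].
Qed.

End Claims.

End P3.
Import P3.

Module P4.

Section PartA.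
Variable D : Type.
Variable ltD : D -> D -> Prop.
Hypothesis hwo : is_well_order ltD.

Notation X := (P1.X D).
Notation ltX := (P1.ltX D ltD).
Notation II := (I_X ltX).
Notation PPX := (PP ltX).

Lemma ltX_tot' : forall a b : X, True -> True -> ltX a b \/ a = b \/ ltX b a.
Proof. intros a b _ _. apply ltX_tot; exact hwo. Qed.

Lemma mono_ge (phi : X -> X) : (forall x y, ltX x y -> ltX (phi x) (phi y)) -> forall x, ~ ltX (phi x) x.
Proof.
  intros Hm x Hx.
  destruct (wf_min ltX (ltX_wf D ltD hwo) (fun x => ltX (phi x) x) (ex_intro (fun x => ltX (phi x) x) x Hx)) as [y [Hy Hmin]].
  apply (Hmin (phi y)); [apply Hm; exact Hy|exact Hy].
Qed.

Lemma PP_of_embeds (A : X -> Prop) : embeds_into ltX A -> PPX A.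
Proof.
  intros [h [Hh Hiff]].
  assert (Rwf := ltX_wf D ltD hwo).
  assert (Rtr := ltX_trans D ltD hwo).
  assert (Rtot : forall a b : X, A a -> A b -> ltX a b \/ a = b \/ ltX b a) by (intros; apply ltX_tot; exact hwo).
  assert (Qtot := ltX_tot').
  set (c := cc X X ltX ltX A (fun _ => True) Rwf (zeroX D)).
  set (Dm := Dom X X ltX ltX A (fun _ => True) Rwf (zeroX D)).
  assert (Hincr : forall t t', Dm t -> A t' -> ltX t' t -> ltX (c t') (c t)).
  { intros. apply Dom_incr; assumption. }
  assert (Hdown : forall t u, Dm t -> ltX u (c t) -> exists t', Dm t' /\ c t' = u).
  { intros t u Ht Hu. exact (image_down X X ltX ltX A (fun _ => True) Rwf Rtr Rwf Qtot (zeroX D) t u Ht I Hu). }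
  assert (HDA : forall t, Dm t -> A t) by (intros t [Ht _]; exact Ht).
  assert (Hhm : forall x y, ltX x y -> ltX (h x) (h y)) by (intros x y; apply Hiff).
  destruct (collapse_final X X ltX ltX A (fun _ => True) Rwf Rtr Rtot Rwf Qtot (zeroX D)) as [Hall|[t0 [Ht0 [Hiff0 Hsurj]]]].
  -
    assert (Hsurj : forall x, exists a, A a /\ c a = x).
    { intros x. apply NNPP. intros N.
      assert (Hb : forall a, A a -> ltX (c a) x).
      { intros a Ha. destruct (ltX_tot D ltD hwo (c a) x) as [L|[E|L]]; [exact L| |].
        - exfalso. apply N. eauto.
        - exfalso. destruct (Hdown a x (Hall a Ha) L) as [t' [Ht' E]]. apply N. exists t'. split; [apply HDA; exact Ht'|exact E]. }
      assert (MONO : forall y z, ltX y z -> ltX (c (h y)) (c (h z))).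
      { intros y z L. apply Hincr; [apply Hall; apply Hh|apply Hh|apply Hhm; exact L]. }
      exact (mono_ge (fun z => c (h z)) MONO x (Hb _ (Hh x))). }
    assert (Hch : forall x, { a | A a /\ c a = x }) by (intros x; apply constructive_indefinite_description; apply Hsurj).
    exists (fun x => proj1_sig (Hch x)).
    assert (Hc1 : forall x, A (proj1_sig (Hch x))) by (intros x; apply (proj2_sig (Hch x))).
    assert (Hc2 : forall x, c (proj1_sig (Hch x)) = x) by (intros x; apply (proj2_sig (Hch x))).
    assert (cinj : forall a b, A a -> A b -> c a = c b -> a = b).
    { intros a b Ha Hb E. destruct (Rtot a b Ha Hb) as [L|[E'|L]]; [|exact E'|].
      - exfalso. pose proof (Hincr b a (Hall b Hb) Ha L). rewrite E in H. exact (ltX_irr D ltD _ H).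
      - exfalso. pose proof (Hincr a b (Hall a Ha) Hb L). rewrite E in H. exact (ltX_irr D ltD _ H). }
    split; [exact Hc1|split].
    + intros y Hy. exists (c y). apply cinj; [apply Hc1|exact Hy|apply Hc2].
    + intros x y. split.
      * intros L. destruct (Rtot (proj1_sig (Hch x)) (proj1_sig (Hch y)) (Hc1 x) (Hc1 y)) as [L2|[E|L2]]; [exact L2| |].
        -- exfalso. rewrite <- (Hc2 x), <- (Hc2 y), E in L. exact (ltX_irr D ltD _ L).
        -- exfalso. pose proof (Hincr _ _ (Hall _ (Hc1 x)) (Hc1 y) L2). rewrite !Hc2 in H.
           exact (ltX_asym D ltD hwo _ _ L H).
      * intros L. pose proof (Hincr _ _ (Hall _ (Hc1 y)) (Hc1 x) L). rewrite !Hc2 in H. exact H.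
  -
    exfalso.
    assert (Hch : forall x, { a | Dm a /\ c a = x }) by (intros x; apply constructive_indefinite_description; apply Hsurj; exact I).
    set (d := fun x => proj1_sig (Hch x)).
    assert (Hd1 : forall x, Dm (d x)) by (intros x; apply (proj2_sig (Hch x))).
    assert (Hd2 : forall x, c (d x) = x) by (intros x; apply (proj2_sig (Hch x))).
    clearbody d.
    assert (dm : forall x y, ltX x y -> ltX (d x) (d y)).
    { intros x y L. destruct (Rtot (d x) (d y) (HDA _ (Hd1 x)) (HDA _ (Hd1 y))) as [L2|[E|L2]]; [exact L2| |].
      - exfalso. rewrite <- (Hd2 x), <- (Hd2 y), E in L. exact (ltX_irr D ltD _ L).
      - exfalso. pose proof (Hincr _ _ (Hd1 x) (HDA _ (Hd1 y)) L2). rewrite !Hd2 in H.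
        exact (ltX_asym D ltD hwo _ _ L H). }
    apply (mono_ge d dm t0). apply (Hiff0 _ (HDA _ (Hd1 t0))). apply Hd1.
Qed.

Lemma embeds_of_PP (A : X -> Prop) : PPX A -> embeds_into ltX A.
Proof. intros [h [H1 [_ H3]]]. exists h. split; assumption. Qed.

Lemma PP_iff (A : X -> Prop) : PPX A <-> ~ II A.
Proof.
  unfold II, I_X. split.
  - intros H N. apply N. apply embeds_of_PP. exact H.
  - intros H. apply PP_of_embeds. apply NNPP. exact H.
Qed.

Lemma I_sub (A B : X -> Prop) : subset A B -> II B -> II A.
Proof. intros S HB [h [Hh Hi]]. apply HB. exists h. split; [intros x; apply S; apply Hh|exact Hi]. Qed.

Lemma I_union (A B : X -> Prop) : II A -> II B -> II (setunion A B).
Proof. intros HA HB H. destruct (indec D ltD hwo A B H); contradiction. Qed.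

Lemma I_empty : II (fun _ => False).
Proof. intros [h [Hh _]]. exact (Hh (zeroX D)). Qed.

Lemma not_I_full : ~ II (fun _ => True).
Proof. intros H. apply H. exists (fun x => x). split; [intros; exact I|tauto]. Qed.

Lemma is_ideal_I : is_ideal II.
Proof.
  split; [exact I_empty|split; [|split]].
  - intros A B S HB. exact (I_sub A B S HB).
  - exact I_union.
  - exact not_I_full.
Qed.

Lemma I_trans (A B C : X -> Prop) : II (setminus A B) -> II (setminus B C) -> II (setminus A C).
Proof.
  intros H1 H2. apply (I_sub _ (setunion (setminus A B) (setminus B C))); [|apply I_union; assumption].
  intros x [Ha Hc]. destruct (classic (B x)); [right; split; assumption|left; split; assumption].
Qed.

Lemma I_refl (A : X -> Prop) : II (setminus A A).
Proof. apply (I_sub _ (fun _ => False)); [intros x [H1 H2]; contradiction|exact I_empty]. Qed.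

Lemma sep_iff (A B : X -> Prop) : PPX A -> PPX B ->
  (sep_le PPX subset A B <-> II (setminus A B)).
Proof.
  intros PA PB. split.
  - intros Hs Hemb. assert (P1 : PPX (setminus A B)) by (apply PP_of_embeds; exact Hemb).
    destruct (Hs _ P1 (fun x H => proj1 H)) as [s [Ps [S1 S2]]].
    destruct (embeds_of_PP s Ps) as [h [Hh _]].
    destruct (S1 _ (Hh (zeroX D))) as [_ NB]. exact (NB (S2 _ (Hh (zeroX D)))).
  - intros HI r Pr Hr. exists (fun x => r x /\ B x). split; [|split].
    + apply PP_iff. intros Hs. apply (proj1 (PP_iff r) Pr).
      apply (I_sub _ (setunion (fun x => r x /\ B x) (setminus A B))); [|apply I_union; assumption].
      intros x Hx. destruct (classic (B x)); [left; split; assumption|right; split; [apply Hr; exact Hx|assumption]].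
    + intros x H; apply H.
    + intros x H; apply H.
Qed.

Lemma sep_refl (A : X -> Prop) : sep_le PPX subset A A.
Proof. intros r Pr Hr. exists r. split; [exact Pr|split; [intros x H; exact H|exact Hr]]. Qed.

Lemma sig_pred_ext {T : Type} {P : (T -> Prop) -> Prop} (a b : {C | P C}) :
  (forall q, proj1_sig a q <-> proj1_sig b q) -> a = b.
Proof.
  destruct a as [a pa], b as [b pb]. simpl. intros H.
  assert (E : a = b) by (apply functional_extensionality; intros q; apply propositional_extensionality; apply H).
  subst b. f_equal. apply proof_irrelevance.
Qed.

Definition repr (a : sq_car PPX subset) : X -> Prop :=
  proj1_sig (constructive_indefinite_description _ (proj2_sig a)).

Lemma repr_spec a : PPX (repr a) /\ forall q, proj1_sig a q <-> (PPX q /\ sep_le PPX subset (repr a) q /\ sep_le PPX subset q (repr a)).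
Proof. unfold repr. destruct (constructive_indefinite_description _ _) as [p Hp]. exact Hp. Qed.

Definition eqI (A B : X -> Prop) := II (setminus A B) /\ II (setminus B A).

Lemma class_iff a q : proj1_sig a q <-> (PPX q /\ eqI (repr a) q).
Proof.
  destruct (repr_spec a) as [Pr H]. rewrite H. split.
  - intros [Pq [S1 S2]]. split; [exact Pq|]. split; [apply (sep_iff _ _ Pr Pq); exact S1|apply (sep_iff _ _ Pq Pr); exact S2].
  - intros [Pq [S1 S2]]. split; [exact Pq|]. split; [apply (sep_iff _ _ Pr Pq); exact S1|apply (sep_iff _ _ Pq Pr); exact S2].
Qed.

Lemma repr_in a : proj1_sig a (repr a).
Proof. apply class_iff. split; [apply repr_spec|split; apply I_refl]. Qed.

Definition fmap (a : sq_car PPX subset) : bq_pos II :=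
  exist _ (fun B => II (setminus (repr a) B) /\ II (setminus B (repr a)))
    (ex_intro _ (repr a) (conj (proj1 (PP_iff _) (proj1 (repr_spec a))) (fun B => iff_refl _))).

Lemma partA3 : exists f : sq_car PPX subset -> bq_pos II,
       (forall a b, f a = f b -> a = b) /\ (forall c, exists a, f a = c) /\
       (forall a b, sq_le PPX subset a b <-> bq_le II (f a) (f b)).
Proof.
  exists fmap. split; [|split].
  - intros a b E.
    assert (E1 : eqI (repr a) (repr b)).
    { assert (H : proj1_sig (fmap b) (repr b)) by (simpl; split; apply I_refl).
      rewrite <- E in H. exact H. }
    apply sig_pred_ext. intros q. rewrite !class_iff. split.
    + intros [Pq [H1 H2]]. split; [exact Pq|]. split; [exact (I_trans _ _ _ (proj2 E1) H1)|exact (I_trans _ _ _ H2 (proj1 E1))].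
    + intros [Pq [H1 H2]]. split; [exact Pq|]. split; [exact (I_trans _ _ _ (proj1 E1) H1)|exact (I_trans _ _ _ H2 (proj2 E1))].
  - intros [C [A [nA HC]]].
    assert (PA : PPX A) by (apply PP_iff; exact nA).
    assert (Ha : exists p, PPX p /\ forall q, (fun q => PPX q /\ sep_le PPX subset A q /\ sep_le PPX subset q A) q <-> (PPX q /\ sep_le PPX subset p q /\ sep_le PPX subset q p)).
    { exists A. split; [exact PA|]. intros q; tauto. }
    set (a0 := @exist _ (fun C => exists p, PPX p /\ forall q, C q <-> (PPX q /\ sep_le PPX subset p q /\ sep_le PPX subset q p)) (fun q => PPX q /\ sep_le PPX subset A q /\ sep_le PPX subset q A) Ha : sq_car PPX subset).
    exists a0. apply sig_pred_ext. simpl. intros B. rewrite HC.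
    assert (Hr := repr_in a0). simpl in Hr. destruct Hr as [Pr [S1 S2]].
    assert (E1 : eqI A (repr a0)) by (split; [apply (sep_iff _ _ PA Pr); exact S1|apply (sep_iff _ _ Pr PA); exact S2]).
    split.
    + intros [H1 H2]. split; [exact (I_trans _ _ _ (proj1 E1) H1)|exact (I_trans _ _ _ H2 (proj2 E1))].
    + intros [H1 H2]. split; [exact (I_trans _ _ _ (proj2 E1) H1)|exact (I_trans _ _ _ H2 (proj1 E1))].
  - intros a b. split.
    + intros [p [q [Hp [Hq S]]]].
      apply class_iff in Hp. apply class_iff in Hq. destruct Hp as [Pp Ep]. destruct Hq as [Pq Eq].
      exists p, q. split; [simpl; split; [apply Ep|apply Ep]|split; [simpl; split; [apply Eq|apply Eq]|]].
      apply (sep_iff _ _ Pp Pq). exact S.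
    + intros [A [B [HA [HB HI]]]]. simpl in HA, HB.
      exists (repr a), (repr b). split; [apply repr_in|split; [apply repr_in|]].
      apply (sep_iff _ _ (proj1 (repr_spec a)) (proj1 (repr_spec b))).
      apply (I_trans _ A); [exact (proj1 HA)|]. apply (I_trans _ B); [exact HI|exact (proj2 HB)].
Qed.

End PartA.

End P4.
Import P4.

Module P5.

Definition lexR {A B : Type} (R1 : A -> A -> Prop) (R2 : B -> B -> Prop) (p q : A * B) : Prop :=
  R1 (fst p) (fst q) \/ (fst p = fst q /\ R2 (snd p) (snd q)).

Lemma wf_lex {A B : Type} (R1 : A -> A -> Prop) (R2 : B -> B -> Prop) :
  well_founded R1 -> well_founded R2 -> well_founded (lexR R1 R2).
Proof.
  intros W1 W2 [a b]. revert b. induction (W1 a) as [a _ IHa]. intros b.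
  induction (W2 b) as [b _ IHb]. constructor. intros [a' b'] [H|[E H]]; simpl in *.
  - apply IHa. exact H.
  - subst a'. apply IHb. exact H.
Qed.

Section Hess.
Variable D : Type.
Variable ltD : D -> D -> Prop.
Hypothesis hwo : is_well_order ltD.
Notation leD := (P1.leD D ltD).

Definition cutlt (x : D) : D -> Prop := fun d => ltD d x.
Definition Inj (S S' : D -> Prop) := exists f : D -> D,
  (forall a, S a -> S' (f a)) /\ (forall a b, S a -> S b -> f a = f b -> a = b).
Definition Inj2 (S S' : D -> Prop) := exists f : D * D -> D,
  (forall a b, S a -> S b -> S' (f (a, b))) /\
  (forall a b a' b', S a -> S b -> S a' -> S b' -> f (a, b) = f (a', b') -> a = a' /\ b = b').
Definition Inf (S : D -> Prop) := exists e : nat -> D, (forall n, S (e n)) /\ (forall n m, e n = e m -> n = m).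
Definition Hs (S : D -> Prop) := Inf S -> Inj2 S S.
Definition Fin (S : D -> Prop) := exists l, forall x, S x -> In x l.
Definition cardlike (K : D -> Prop) := forall x, K x -> ~ Inj K (cutlt x).

Lemma Inj_trans S1 S2 S3 : Inj S1 S2 -> Inj S2 S3 -> Inj S1 S3.
Proof.
  intros [f [F1 F2]] [g [G1 G2]]. exists (fun x => g (f x)). split.
  - intros a Ha. apply G1, F1, Ha.
  - intros a b Ha Hb E. apply F2; [exact Ha|exact Hb|]. apply G2; [apply F1; exact Ha|apply F1; exact Hb|exact E].
Qed.

Lemma Inf_Inj S S' : Inf S -> Inj S S' -> Inf S'.
Proof.
  intros [e [E1 E2]] [f [F1 F2]]. exists (fun n => f (e n)). split.
  - intros n. apply F1, E1.
  - intros n m E. apply E2. apply F2; [apply E1|apply E1|exact E].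
Qed.

Lemma chain_inj (e : nat -> D) : (forall n, ltD (e n) (e (S n))) -> forall n m, e n = e m -> n = m.
Proof.
  intros H.
  assert (L : forall n m, n < m -> ltD (e n) (e m)).
  { intros n m Hnm. induction Hnm as [|m Hnm IH]; [apply H|].
    exact (ltD_trans D ltD hwo _ _ _ IH (H m)). }
  intros n m E. destruct (Nat.lt_trichotomy n m) as [Hl|[Hl|Hl]]; [|exact Hl|].
  - exfalso. pose proof (L _ _ Hl). rewrite E in H0. exact (ltD_irr D ltD hwo _ H0).
  - exfalso. pose proof (L _ _ Hl). rewrite E in H0. exact (ltD_irr D ltD hwo _ H0).
Qed.

Lemma notInf_Fin : forall x, ~ Inf (cutlt x) -> Fin (cutlt x).
Proof.
  intros x. induction (ltD_wf D ltD hwo x) as [x _ IH]. intros nI.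
  destruct (classic (exists d, ltD d x)) as [Hne|Hem]; [|exists nil; intros d Hd; apply Hem; eauto].
  destruct (classic (exists y, ltD y x /\ forall d, ltD d x -> leD d y)) as [[y [Hy Hmax]]|Hnm].
  - destruct (IH y Hy) as [l Hl].
    + intros [e [E1 E2]]. apply nI. exists e. split; [intros n; exact (ltD_trans D ltD hwo _ _ _ (E1 n) Hy)|exact E2].
    + exists (y :: l). intros d Hd. destruct (Hmax d Hd) as [->|L]; [left; reflexivity|right; apply Hl; exact L].
  - exfalso. apply nI.
    assert (Hn : forall b, { b' | ltD b x -> ltD b b' /\ ltD b' x }).
    { intros b. apply constructive_indefinite_description.
      destruct (classic (ltD b x)) as [Hb|Hb]; [|exists b; intros; contradiction].
      apply NNPP. intros N. apply Hnm. exists b. split; [exact Hb|]. intros d Hd.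
      destruct (ltD_tot D ltD hwo d b) as [L|[E|L]]; unfold P1.leD; auto. exfalso. apply N. exists d. auto. }
    destruct Hne as [d0 Hd0].
    set (e := fix e n := match n with O => d0 | S n => proj1_sig (Hn (e n)) end).
    assert (He : forall n, ltD (e n) x).
    { induction n as [|n IHn]; [exact Hd0|]. simpl. apply (proj2_sig (Hn (e n)) IHn). }
    exists e. split; [exact He|]. apply chain_inj. intros n. simpl. apply (proj2_sig (Hn (e n)) (He n)).
Qed.

Lemma Fin_pairs (Sp : D -> Prop) : Fin Sp ->
  ~ exists e : nat -> D * D, (forall n, Sp (fst (e n)) /\ Sp (snd (e n))) /\ (forall n m, e n = e m -> n = m).
Proof.
  intros [l Hl] [e [E1 E2]].
  set (N := length (list_prod l l)).
  assert (ND : NoDup (map e (seq 0 (S N)))).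
  { apply Injective_map_NoDup; [intros a b; apply E2|apply seq_NoDup]. }
  assert (INC : incl (map e (seq 0 (S N))) (list_prod l l)).
  { intros p Hp. apply in_map_iff in Hp. destruct Hp as [n [<- _]]. destruct (e n) as [a b] eqn:Ee.
    apply in_prod; apply Hl; [replace a with (fst (e n)) by (rewrite Ee; reflexivity)|replace b with (snd (e n)) by (rewrite Ee; reflexivity)]; apply E1. }
  pose proof (NoDup_incl_length ND INC). rewrite length_map, length_seq in H. unfold N in H. lia.
Qed.

Lemma Inf_avoid Sp m : Inf Sp -> exists e : nat -> D, (forall n, Sp (e n) /\ e n <> m) /\ (forall n k, e n = e k -> n = k).
Proof.
  intros [e [E1 E2]].
  assert (HN : exists N, forall n, e (S (n + N)) <> m).
  { destruct (classic (exists n0, e n0 = m)) as [[n0 Hn0]|Hno].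
    - exists n0. intros n E. rewrite <- Hn0 in E. apply E2 in E. lia.
    - exists 0. intros n E. apply Hno. eauto. }
  destruct HN as [N HN]. exists (fun n => e (S (n + N))). split.
  - intros n. split; [apply E1|apply HN].
  - intros n k E. apply E2 in E. lia.
Qed.

Lemma hotel Sp m : Inf Sp -> Sp m -> Inj Sp (fun d => Sp d /\ d <> m).
Proof.
  intros HI Hm. destruct (Inf_avoid Sp m HI) as [e [E1 E2]].
  set (phi := fun u => match excluded_middle_informative (exists n, u = e n) with
     | left H => e (S (proj1_sig (constructive_indefinite_description _ H)))
     | right _ => if excluded_middle_informative (u = m) then e 0 else u end).
  exists phi. split.
  - intros a Ha. unfold phi. destruct (excluded_middle_informative _) as [H|H]; [apply E1|].
    destruct (excluded_middle_informative (a = m)); [apply E1|split; assumption].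
  - intros a b Ha Hb. unfold phi.
    destruct (excluded_middle_informative (exists n, a = e n)) as [H1|H1];
    destruct (excluded_middle_informative (exists n, b = e n)) as [H2|H2].
    + destruct (constructive_indefinite_description _ H1) as [n Hn].
      destruct (constructive_indefinite_description _ H2) as [k Hk]. simpl. intros E.
      apply E2 in E. injection E as E. subst. reflexivity.
    + destruct (constructive_indefinite_description _ H1) as [n Hn]. simpl.
      destruct (excluded_middle_informative (b = m)) as [Hbm|Hbm].
      * intros E. apply E2 in E. discriminate.
      * intros E. exfalso. apply H2. eauto.
    + destruct (constructive_indefinite_description _ H2) as [k Hk]. simpl.
      destruct (excluded_middle_informative (a = m)) as [Ham|Ham].
      * intros E. apply E2 in E. discriminate.
      * intros E. exfalso. apply H1. eauto.
    + destruct (excluded_middle_informative (a = m)) as [Ham|Ham];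
      destruct (excluded_middle_informative (b = m)) as [Hbm|Hbm]; intros E.
      * congruence.
      * exfalso. apply H2. eauto.
      * exfalso. apply H1. eauto.
      * exact E.
Qed.

(* Goedel order *)
Definition mx (p : D * D) : D := if excluded_middle_informative (ltD (fst p) (snd p)) then snd p else fst p.
Definition gl (p q : D * D) : Prop := lexR ltD (lexR ltD ltD) (mx p, p) (mx q, q).

Lemma gl_wf : well_founded gl.
Proof.
  unfold gl. apply (Inverse_Image.wf_inverse_image _ _ (lexR ltD (lexR ltD ltD)) (fun p => (mx p, p))).
  apply wf_lex; [apply ltD_wf; exact hwo|apply wf_lex; apply ltD_wf; exact hwo].
Qed.

Lemma lex_trans {A B : Type} (R1 : A -> A -> Prop) (R2 : B -> B -> Prop) :
  (forall a b c, R1 a b -> R1 b c -> R1 a c) -> (forall a b c, R2 a b -> R2 b c -> R2 a c) ->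
  forall p q r, lexR R1 R2 p q -> lexR R1 R2 q r -> lexR R1 R2 p r.
Proof.
  intros T1 T2 p q r [H1|[E1 H1]] [H2|[E2 H2]].
  - left. eauto.
  - left. rewrite <- E2. exact H1.
  - left. rewrite E1. exact H2.
  - right. split; [congruence|eauto].
Qed.

Lemma lex_tot {A B : Type} (R1 : A -> A -> Prop) (R2 : B -> B -> Prop) :
  (forall a b, R1 a b \/ a = b \/ R1 b a) -> (forall a b, R2 a b \/ a = b \/ R2 b a) ->
  forall p q, lexR R1 R2 p q \/ p = q \/ lexR R1 R2 q p.
Proof.
  intros T1 T2 [a b] [a' b']. unfold lexR; simpl.
  destruct (T1 a a') as [L|[<-|L]]; [auto| |auto].
  destruct (T2 b b') as [L|[<-|L]]; auto.
Qed.

Lemma gl_trans : forall p q r, gl p q -> gl q r -> gl p r.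
Proof.
  unfold gl. intros p q r. apply lex_trans; [apply ltD_trans; exact hwo|].
  apply lex_trans; apply ltD_trans; exact hwo.
Qed.

Lemma gl_tot : forall p q, gl p q \/ p = q \/ gl q p.
Proof.
  intros p q. unfold gl.
  destruct (lex_tot ltD (lexR ltD ltD) (ltD_tot D ltD hwo) (lex_tot ltD ltD (ltD_tot D ltD hwo) (ltD_tot D ltD hwo)) (mx p, p) (mx q, q)) as [H|[E|H]]; auto.
  right; left. congruence.
Qed.

Lemma mx_ge (p : D * D) : leD (fst p) (mx p) /\ leD (snd p) (mx p).
Proof.
  unfold mx. destruct (excluded_middle_informative (ltD (fst p) (snd p))) as [L|L]; unfold P1.leD.
  - split; [right; exact L|left; reflexivity].
  - split; [left; reflexivity|]. destruct (ltD_tot D ltD hwo (snd p) (fst p)) as [H|[H|H]]; auto.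
    contradiction.
Qed.

Lemma mx_in (p : D * D) : mx p = fst p \/ mx p = snd p.
Proof. unfold mx. destruct (excluded_middle_informative _); auto. Qed.

Lemma gl_mx p q : gl p q -> leD (mx p) (mx q).
Proof. intros [H|[E _]]; simpl in *; unfold P1.leD; auto. Qed.

Lemma leD_lt_trans a b c : leD a b -> ltD b c -> ltD a c.
Proof. intros [->|L] L2; [exact L2|exact (ltD_trans D ltD hwo _ _ _ L L2)]. Qed.

Lemma main_card (K : D -> Prop) :
  (forall a b, K b -> ltD a b -> K a) -> Inf K -> cardlike K ->
  (forall x, K x -> Hs (cutlt x)) -> Inj2 K K.
Proof.
  intros Kdown HI Kc IH.
  destruct HI as [e0 [E01 E02]] eqn:HIe.
  set (PT := fun p : D * D => K (fst p) /\ K (snd p)).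
  assert (Rtot : forall a b, PT a -> PT b -> gl a b \/ a = b \/ gl b a) by (intros; apply gl_tot).
  assert (Qtot : forall a b, K a -> K b -> ltD a b \/ a = b \/ ltD b a) by (intros; apply ltD_tot; exact hwo).
  assert (Qwf := ltD_wf D ltD hwo).
  set (c := cc (D * D) D gl ltD PT K gl_wf (e0 0)).
  set (Dm := Dom (D * D) D gl ltD PT K gl_wf (e0 0)).
  assert (Hincr : forall t t', Dm t -> PT t' -> gl t' t -> ltD (c t') (c t)).
  { intros. apply Dom_incr; assumption. }
  assert (HDA : forall t, Dm t -> PT t) by (intros t [Ht _]; exact Ht).
  assert (HPU : forall t, Dm t -> K (c t)) by (intros; apply Dom_PU; assumption).
  destruct (collapse_final (D * D) D gl ltD PT K gl_wf gl_trans Rtot Qwf Qtot (e0 0)) as [Hall|[p0 [Hp0 [Hiff0 Hsurj]]]].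
  - exists c. split.
    + intros a b Ha Hb. apply HPU. apply Hall. split; assumption.
    + intros a b a' b' Ha Hb Ha' Hb' E.
      assert (P1 : PT (a, b)) by (split; assumption). assert (P2 : PT (a', b')) by (split; assumption).
      destruct (Rtot _ _ P1 P2) as [L|[E'|L]].
      * exfalso. pose proof (Hincr _ _ (Hall _ P2) P1 L). fold c in H. rewrite E in H. exact (ltD_irr D ltD hwo _ H).
      * inversion E'. auto.
      * exfalso. pose proof (Hincr _ _ (Hall _ P1) P2 L). fold c in H. rewrite E in H. exact (ltD_irr D ltD hwo _ H).
  - exfalso.
    assert (Hch : forall u, { t | K u -> Dm t /\ c t = u }).
    { intros u. apply constructive_indefinite_description.
      destruct (classic (K u)) as [Ku|nKu]; [|exists (e0 0, e0 0); intros; contradiction].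
      destruct (Hsurj u Ku) as [t Ht]. exists t. intros _. exact Ht. }
    set (d := fun u => proj1_sig (Hch u)).
    assert (Hd1 : forall u, K u -> Dm (d u)) by (intros u Ku; apply (proj2_sig (Hch u) Ku)).
    assert (Hd2 : forall u, K u -> c (d u) = u) by (intros u Ku; apply (proj2_sig (Hch u) Ku)).
    clearbody d.
    assert (dinj : forall u v, K u -> K v -> d u = d v -> u = v).
    { intros u v Ku Kv E. rewrite <- (Hd2 u Ku), <- (Hd2 v Kv), E. reflexivity. }
    set (m := mx p0).
    assert (Km : K m) by (destruct (mx_in p0) as [E|E]; unfold m; rewrite E; apply Hp0).
    assert (Hbound : forall u, K u -> leD (fst (d u)) m /\ leD (snd (d u)) m).
    { intros u Ku. assert (G : gl (d u) p0) by (apply Hiff0; [apply HDA, Hd1, Ku|apply Hd1, Ku]).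
      pose proof (gl_mx _ _ G) as L. destruct (mx_ge (d u)) as [L1 L2].
      split; [destruct L1 as [E1|L1]; [rewrite E1; exact L|]|destruct L2 as [E2|L2]; [rewrite E2; exact L|]];
      (right; destruct L as [E|L]; [unfold m; rewrite <- E; exact L1 + exact L2|]).
      - exact (ltD_trans D ltD hwo _ _ _ L1 L).
      - exact (ltD_trans D ltD hwo _ _ _ L2 L). }
    assert (Hm' : exists m', K m' /\ ltD m m').
    { apply NNPP. intros N. apply (Kc m Km).
      apply (Inj_trans _ (fun d => K d /\ d <> m)).
      - apply hotel; [exists e0; split; assumption|exact Km].
      - exists (fun x => x). split; [|auto]. intros a [Ka Ham]. unfold cutlt.
        destruct (ltD_tot D ltD hwo a m) as [L|[E|L]]; [exact L|contradiction|].
        exfalso. apply N. eauto. }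
    destruct Hm' as [m' [Km' Lm']].
    assert (Hin : forall u, K u -> cutlt m' (fst (d u)) /\ cutlt m' (snd (d u))).
    { intros u Ku. destruct (Hbound u Ku) as [L1 L2]. split; [exact (leD_lt_trans _ _ _ L1 Lm')|exact (leD_lt_trans _ _ _ L2 Lm')]. }
    destruct (classic (Inf (cutlt m'))) as [Inf'|nInf'].
    + destruct (IH m' Km' Inf') as [pr [Pr1 Pr2]].
      apply (Kc m' Km'). exists (fun u => pr (d u)). split.
      * intros u Ku. rewrite (surjective_pairing (d u)). apply Pr1; apply Hin; exact Ku.
      * intros u v Ku Kv E. apply dinj; [exact Ku|exact Kv|].
        rewrite (surjective_pairing (d u)), (surjective_pairing (d v)) in E.
        destruct (Pr2 _ _ _ _ (proj1 (Hin u Ku)) (proj2 (Hin u Ku)) (proj1 (Hin v Kv)) (proj2 (Hin v Kv)) E) as [Ea Eb].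
        rewrite (surjective_pairing (d u)), (surjective_pairing (d v)), Ea, Eb. reflexivity.
    + apply (Fin_pairs _ (notInf_Fin m' nInf')). exists (fun n => d (e0 n)). split.
      * intros n. apply Hin. apply E01.
      * intros n k E. apply E02. apply dinj; [apply E01|apply E01|exact E].
Qed.

Lemma Step (Sp : D -> Prop) : (forall a b, Sp b -> ltD a b -> Sp a) ->
  (forall x, Sp x -> Hs (cutlt x)) -> Hs Sp.
Proof.
  intros Sdown IH HI.
  destruct (classic (exists x, Sp x /\ Inj Sp (cutlt x))) as [Hz|Hz].
  - destruct (wf_min ltD (ltD_wf D ltD hwo) _ Hz) as [y [[Sy Iy] Hmin]].
    assert (KS : forall a, cutlt y a -> Sp a) by (intros a Ha; exact (Sdown _ _ Sy Ha)).
    assert (Hk : Inj2 (cutlt y) (cutlt y)).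
    { apply main_card.
      - intros a b Hb L. exact (ltD_trans D ltD hwo _ _ _ L Hb).
      - exact (Inf_Inj _ _ HI Iy).
      - intros x Hx Ix. apply (Hmin x); [|exact Hx]. split; [apply KS; exact Hx|].
        exact (Inj_trans _ _ _ Iy Ix).
      - intros x Hx. apply IH. apply KS. exact Hx. }
    destruct Iy as [phi [F1 F2]]. destruct Hk as [pr [P1 P2]].
    exists (fun p => pr (phi (fst p), phi (snd p))). split.
    + intros a b Ha Hb. simpl. apply KS. apply P1; apply F1; assumption.
    + intros a b a' b' Ha Hb Ha' Hb' E. simpl in E.
      destruct (P2 _ _ _ _ (F1 _ Ha) (F1 _ Hb) (F1 _ Ha') (F1 _ Hb') E) as [E1 E2].
      split; apply F2; assumption.
  - apply main_card; auto.
    intros x Hx Ix. apply Hz. exists x. split; assumption.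
Qed.

Lemma Hs_cut : forall x, Hs (cutlt x).
Proof.
  intros x. induction (ltD_wf D ltD hwo x) as [x _ IH]. apply Step.
  - intros a b Hb L. exact (ltD_trans D ltD hwo _ _ _ L Hb).
  - intros z Hz. apply IH. exact Hz.
Qed.

Lemma Hs_all : Hs (fun _ => True).
Proof. apply Step; [auto|]. intros x _. apply Hs_cut. Qed.

End Hess.

End P5.
Import P5.


Section Final.
Variable D : Type.
Variable ltD : D -> D -> Prop.
Hypothesis hwo : is_well_order ltD.
Notation X := (P1.X D).
Notation ltX := (P1.ltX D ltD).

Lemma X_inj_D : (exists e : nat -> D, forall n, ltD (e n) (e (S n))) ->
  exists phi : X -> D, forall x y, phi x = phi y -> x = y.
Proof.
  intros [e He].
  assert (Einj := chain_inj D ltD hwo e He).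
  destruct (Hs_all D ltD hwo) as [pr [_ Pr]].
  { exists e. split; [intros; exact I|exact Einj]. }
  assert (prinj : forall a b a' b', pr (a, b) = pr (a', b') -> a = a' /\ b = b').
  { intros. apply Pr; auto. }
  set (iota := fun u => match excluded_middle_informative (exists n, u = e n) with
     | left H => e (S (proj1_sig (constructive_indefinite_description _ H)))
     | right _ => u end).
  assert (iota_ne : forall u, iota u <> e 0).
  { intros u. unfold iota. destruct (excluded_middle_informative _) as [H|H].
    - intros E. apply Einj in E. discriminate.
    - intros E. apply H. eauto. }
  assert (iota_inj : forall u v, iota u = iota v -> u = v).
  { intros u v. unfold iota.
    destruct (excluded_middle_informative (exists n, u = e n)) as [H1|H1];
    destruct (excluded_middle_informative (exists n, v = e n)) as [H2|H2].
    - destruct (constructive_indefinite_description _ H1) as [n Hn].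
      destruct (constructive_indefinite_description _ H2) as [k Hk]. simpl. intros E.
      apply Einj in E. injection E as E. subst. reflexivity.
    - destruct (constructive_indefinite_description _ H1) as [n Hn]. simpl. intros E. exfalso. apply H2. eauto.
    - destruct (constructive_indefinite_description _ H2) as [k Hk]. simpl. intros E. exfalso. apply H1. eauto.
    - auto. }
  set (enc := fix enc (l : list D) := match l with nil => e 0 | x :: l => iota (pr (x, enc l)) end).
  assert (enc_inj : forall l l', enc l = enc l' -> l = l').
  { induction l as [|x l IH]; intros [|x' l'] E; simpl in E.
    - reflexivity.
    - exfalso. exact (iota_ne _ (eq_sym E)).
    - exfalso. exact (iota_ne _ E).
    - apply iota_inj in E. apply prinj in E. destruct E as [-> E]. apply IH in E. subst. reflexivity. }
  assert (Hl : forall f : X, { l : list D | forall d, vl f d <> 0 -> In d l }).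
  { intros f. apply constructive_indefinite_description. exact (proj2_sig f). }
  set (code := fun f : X => map (fun d => pr (d, e (vl f d))) (proj1_sig (Hl f))).
  exists (fun f => enc (code f)). intros f g E. apply enc_inj in E.
  assert (Key : forall f g : X, code f = code g -> forall d, vl f d <> 0 -> vl g d = vl f d).
  { intros f0 g0 E0 d Hd. assert (Hin : In (pr (d, e (vl f0 d))) (code g0)).
    { rewrite <- E0. unfold code. apply (in_map (fun d => pr (d, e (vl f0 d)))). apply (proj2_sig (Hl f0)). exact Hd. }
    unfold code in Hin. apply in_map_iff in Hin. destruct Hin as [d' [E' _]].
    apply prinj in E'. destruct E' as [-> E']. apply Einj in E'. exact E'. }
  apply X_ext. intros d.
  destruct (Nat.eq_dec (vl f d) 0) as [Z1|Z1].
  - destruct (Nat.eq_dec (vl g d) 0) as [Z2|Z2]; [congruence|].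
    exact (Key g f (eq_sym E) d Z2).
  - symmetry. exact (Key f g E d Z1).
Qed.

End Final.

Theorem mainTheorem4 (D : Type) (ltD : D -> D -> Prop)
  (hwo : is_well_order ltD) (hpos : inhabited D) :
  let X := omega_pow D in
  let ltX := @opow_lt D ltD in
  let I := I_X ltX in
  is_ideal I /\
  ( (* (a) *)
    (forall A : X -> Prop, PP ltX A <-> ~ I A) /\
    (forall A B : X -> Prop, PP ltX A -> PP ltX B ->
       (sep_le (PP ltX) subset A B <-> I (setminus A B))) /\
    (exists f : sq_car (PP ltX) subset -> bq_pos I,
       (forall a b, f a = f b -> a = b) /\ (forall c, exists a, f a = c) /\
       (forall a b, sq_le (PP ltX) subset a b <-> bq_le I (f a) (f b))) ) /\
  ( (* (b) delta >= omega *)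
    (exists e : nat -> D, forall n, ltD (e n) (e (S n))) ->
    exists g : sq_car (PP ltX) subset -> (D -> Prop),
      forall a b, g a = g b -> a = b ).
Proof.
  intros X0 ltX0 I0.
  split; [exact (is_ideal_I D ltD hwo)|].
  split; [split; [|split]|].
  - exact (PP_iff D ltD hwo).
  - exact (sep_iff D ltD hwo).
  - exact (partA3 D ltD hwo).
  - intros He. destruct (X_inj_D D ltD hwo He) as [phi Hphi].
    exists (fun a d => exists x, repr D ltD a x /\ phi x = d).
    intros a b E. cbv beta in E.
    assert (Er : repr D ltD a = repr D ltD b).
    { apply functional_extensionality. intros x. apply propositional_extensionality. split.
      - intros Hx. pose proof (equal_f E (phi x)) as H. cbv beta in H.
        assert (Ha : exists y, repr D ltD a y /\ phi y = phi x) by eauto.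
        destruct (eq_ind _ (fun P : Prop => P) Ha _ H) as [y [Hy Ey]]. apply Hphi in Ey. subst. exact Hy.
      - intros Hx. pose proof (equal_f E (phi x)) as H. cbv beta in H.
        assert (Ha : exists y, repr D ltD b y /\ phi y = phi x) by eauto.
        destruct (eq_ind _ (fun P : Prop => P) Ha _ (eq_sym H)) as [y [Hy Ey]]. apply Hphi in Ey. subst. exact Hy. }
    apply sig_pred_ext. intros q.
    pose proof (proj2 (repr_spec D ltD a) q) as Ha. pose proof (proj2 (repr_spec D ltD b) q) as Hb.
    rewrite Er in Ha. exact (iff_trans Ha (iff_sym Hb)).
Qed.
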